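(* For all runtime type environments $\Delta_1, \Delta_2, \Delta_1'$ such that $\Delta_1,\Delta_2$ and $\Delta_1',\Delta_2$ are defined: if $\mathsf{safe}(\Delta_1, \Delta_2)$ and $\Delta_1 \Longrightarrow \Delta_1'$, then $\mathsf{safe}(\Delta_1', \Delta_2)$.
   Context: Session types: $S ::= \oplus\mathtt{p}\{\ell_i(A_i).S_i\}_{i\in I} \mid \&\mathtt{p}\{\ell_i(A_i).S_i\}_{i\in I} \mid \mu X.S \mid X \mid \mathsf{end}$, where $\mathtt{p},\mathtt{q}$ range over roles, $\ell$ over message labels and $A$ over payload types (compared by syntactic equality). Recursive session types are treated equi-recursively. Queue types are $Q ::= \epsilon \mid (\mathtt{p}\to\mathtt{q} : \ell(A))\cdot Q$, identified up to the congruence $\equiv$ that swaps two adjacent entries $(\mathtt{p}_1\to\mathtt{q}_1:\ell_1(A_1))$ and $(\mathtt{p}_2\to\mathtt{q}_2:\ell_2(A_2))$ whenever $\mathtt{p}_1\neq\mathtt{p}_2$ or $\mathtt{q}_1\neq\mathtt{q}_2$. A runtime type environment $\Delta$ is a finite collection of entries of the forms: actor name $a$; access point name $p$; polarised initialisation token $\iota^{+}:S$ or $\iota^{-}:S$; session endpoint $s[\mathtt{p}]:S$; session queue $s:Q$; each entry's subject occurs at most once, and $\Delta_1,\Delta_2$ denotes disjoint union (defined only when the subjects are disjoint). The congruence $\equiv$ on queue types extends to environments. Labelled transitions on environments ($j\in I$ where applicable): (Send) $\Delta, s[\mathtt{p}]:\oplus\mathtt{q}\{\ell_i(A_i).S_i\}_{i\in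 I}, s:Q \to \Delta, s[\mathtt{p}]:S_j, s:Q\cdot(\mathtt{p}\to\mathtt{q}:\ell_j(A_j))$; (Recv) $\Delta, s[\mathtt{p}]:\&\mathtt{q}\{\ell_i(A_i).S_i\}_{i\in I}, s:(\mathtt{q}\to\mathtt{p}:\ell_j(A_j))\cdot Q \to \Delta, s[\mathtt{p}]:S_j, s:Q$; (End) $\Delta, s[\mathtt{p}]:\mathsf{end} \to \Delta$; (Rec) $\Delta, s[\mathtt{p}]:\mu X.S \to \Delta'$ whenever $\Delta, s[\mathtt{p}]:S\{\mu X.S/X\}\to\Delta'$. Write $\Delta \Longrightarrow \Delta'$ if $\Delta\equiv\Delta_a\to\Delta_b\equiv\Delta'$ for some $\Delta_a,\Delta_b$. The predicate $\mathsf{safe}$ is the largest predicate on environments such that $\mathsf{safe}(\Delta)$ implies: (i) if $\Delta=\Delta_0, s[\mathtt{p}]:\&\mathtt{q}\{\ell_i(A_i).S_i\}_{i\in I}, s:Q$ with $Q\equiv(\mathtt{q}\to\mathtt{p}:\ell_j(B_j))\cdot Q'$, then $j\in I$ and $B_j=A_j$; (ii) if $\Delta=\Delta_0, s[\mathtt{p}]:\mu X.S$ then $\mathsf{safe}(\Delta_0, s[\mathtt{p}]:S\{\mu X.S/X\})$; (iii) if $\Delta\Longrightarrow\Delta'$ then $\mathsf{safe}(\Delta')$. *)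

(* Defs.v *)
From Stdlib Require Import List Arith Relations.
Import ListNotations.

Set Implicit Arguments.

Section Env.

(* Roles, message labels, payload types (compared by syntactic = Leibniz
   equality), actor names, access point names, initialisation tokens and
   session names are arbitrary types. *)
Variables (Role Label Pay Actor AP Tok Sess : Type).

(* Session types, with de Bruijn indices for recursion variables:
   [Mu S] binds index 0 in [S].  A branch {l_i(A_i).S_i}_{i in I} is the
   list of triples (l_i, A_i, S_i). *)
Inductive stype : Type :=
| Sel : Role -> list (Label * Pay * stype) -> stype
| Bra : Role -> list (Label * Pay * stype) -> stype
| Mu  : stype -> stype
| Var : nat -> stype
| End : stype.

Fixpoint lift (c : nat) (S : stype) : stype :=
  match S with
  | Sel q bs => Sel q (map (fun b => match b with (la, S') => (la, lift c S') end) bs)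
  | Bra q bs => Bra q (map (fun b => match b with (la, S') => (la, lift c S') end) bs)
  | Mu S' => Mu (lift (Datatypes.S c) S')
  | Var n => if n <? c then Var n else Var (Datatypes.S n)
  | End => End
  end.

Fixpoint subst (k : nat) (U : stype) (S : stype) : stype :=
  match S with
  | Sel q bs => Sel q (map (fun b => match b with (la, S') => (la, subst k U S') end) bs)
  | Bra q bs => Bra q (map (fun b => match b with (la, S') => (la, subst k U S') end) bs)
  | Mu S' => Mu (subst (Datatypes.S k) (lift 0 U) S')
  | Var n => if n =? k then U else if k <? n then Var (pred n) else Var n
  | End => End
  end.

(* S{mu X.S / X}, the one-step unfolding of mu X.S. *)
Definition unfold (S : stype) : stype := subst 0 (Mu S) S.

Record msg : Type := Msg { sender : Role; receiver : Role; mlabel : Label; mpay : Pay }.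

Definition qtype := list msg.

Inductive qswap : qtype -> qtype -> Prop :=
| QSwap : forall Q1 Q2 m1 m2,
    sender m1 <> sender m2 \/ receiver m1 <> receiver m2 ->
    qswap (Q1 ++ m1 :: m2 :: Q2) (Q1 ++ m2 :: m1 :: Q2).

Definition qcong : qtype -> qtype -> Prop := clos_refl_sym_trans qtype qswap.

Inductive subject : Type :=
| SActor : Actor -> subject
| SAP : AP -> subject
| STokP : Tok -> subject
| STokM : Tok -> subject
| SEP : Sess -> Role -> subject
| SQ : Sess -> subject.

Inductive entry : Type :=
| EName : entry
| ESess : stype -> entry
| EQueue : qtype -> entry.

Definition env := subject -> option entry.

Definition env_finite (D : env) : Prop :=
  exists l : list subject, forall x, D x <> None -> In x l.

Definition kind_ok (x : subject) (e : entry) : Prop :=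
  match x, e with
  | SActor _, EName => True
  | SAP _, EName => True
  | STokP _, ESess _ => True
  | STokM _, ESess _ => True
  | SEP _ _, ESess _ => True
  | SQ _, EQueue _ => True
  | _, _ => False
  end.

Definition is_env (D : env) : Prop :=
  env_finite D /\ forall x e, D x = Some e -> kind_ok x e.

(* Disjoint union D1, D2 (defined when subjects are disjoint). *)
Definition env_disjoint (D1 D2 : env) : Prop :=
  forall x, D1 x = None \/ D2 x = None.

Definition env_union (D1 D2 : env) : env :=
  fun x => match D1 x with Some e => Some e | None => D2 x end.

Inductive entry_equiv : option entry -> option entry -> Prop :=
| EqNone : entry_equiv None None
| EqSame : forall e, entry_equiv (Some e) (Some e)
| EqQueue : forall Q Q', qcong Q Q' ->
    entry_equiv (Some (EQueue Q)) (Some (EQueue Q')).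

Definition env_equiv (D D' : env) : Prop := forall x, entry_equiv (D x) (D' x).

Definition agree_except (xs : list subject) (D D' : env) : Prop :=
  forall y, ~ In y xs -> D' y = D y.

(* Labelled transitions (labels are irrelevant here and omitted). *)
Inductive env_step : env -> env -> Prop :=
| StSend : forall D D' s p q bs Q l A S,
    D (SEP s p) = Some (ESess (Sel q bs)) ->
    D (SQ s) = Some (EQueue Q) ->
    In (l, A, S) bs ->
    D' (SEP s p) = Some (ESess S) ->
    D' (SQ s) = Some (EQueue (Q ++ [Msg p q l A])) ->
    agree_except [SEP s p; SQ s] D D' ->
    env_step D D'
| StRecv : forall D D' s p q bs Q l A S,
    D (SEP s p) = Some (ESess (Bra q bs)) ->
    D (SQ s) = Some (EQueue (Msg q p l A :: Q)) ->
    In (l, A, S) bs ->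
    D' (SEP s p) = Some (ESess S) ->
    D' (SQ s) = Some (EQueue Q) ->
    agree_except [SEP s p; SQ s] D D' ->
    env_step D D'
| StEnd : forall D D' s p,
    D (SEP s p) = Some (ESess End) ->
    D' (SEP s p) = None ->
    agree_except [SEP s p] D D' ->
    env_step D D'
| StRec : forall D Dm D' s p S,
    D (SEP s p) = Some (ESess (Mu S)) ->
    Dm (SEP s p) = Some (ESess (unfold S)) ->
    agree_except [SEP s p] D Dm ->
    env_step Dm D' ->
    env_step D D'.

Definition env_reduces (D D' : env) : Prop :=
  exists Da Db, env_equiv D Da /\ env_step Da Db /\ env_equiv Db D'.

Definition safety_property (P : env -> Prop) : Prop :=
  forall D, P D ->
    (forall s p q bs Q l B Q',
        D (SEP s p) = Some (ESess (Bra q bs)) ->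
        D (SQ s) = Some (EQueue Q) ->
        qcong Q (Msg q p l B :: Q') ->
        exists S, In (l, B, S) bs) /\
    (forall s p S D0,
        D (SEP s p) = Some (ESess (Mu S)) ->
        D0 (SEP s p) = Some (ESess (unfold S)) ->
        agree_except [SEP s p] D D0 ->
        P D0) /\
    (forall D', env_reduces D D' -> P D').

(* safe is the largest predicate satisfying the conditions. *)
Definition safe (D : env) : Prop :=
  exists P, safety_property P /\ P D.

End Env.

(* Main.v *)
Require Import Defs.
From Stdlib Require Import List Classical.
Import ListNotations.

Section Aux.
Variables (Role Label Pay Actor AP Tok Sess : Type).
Notation env := (env Role Label Pay Actor AP Tok Sess).

Lemma eq_refl' (o : option (entry Role Label Pay)) : entry_equiv o o.
Proof. destruct o; constructor. Qed.

Lemma equiv_none (A B : env) x : env_equiv A B -> (A x = None <-> B x = None).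
Proof. intros H; specialize (H x); inversion H; split; congruence. Qed.

Lemma equiv_union (A B D2 : env) : env_equiv A B -> env_equiv (env_union A D2) (env_union B D2).
Proof.
  intros H x; unfold env_union; specialize (H x); inversion H as [Ha Hb|e Ha Hb|Q Q' Hq Ha Hb].
  - apply eq_refl'.
  - apply eq_refl'.
  - constructor; auto.
Qed.

Lemma step_union (A B D2 : env) : env_step A B -> env_disjoint A D2 ->
  env_step (env_union A D2) (env_union B D2).
Proof.
  intros H; induction H; intros Hd.
  - eapply StSend with (s:=s) (p:=p); unfold env_union; eauto.
    rewrite H; eauto. rewrite H0; eauto. rewrite H2; eauto. rewrite H3; eauto.
    intros y Hy; rewrite (H4 y Hy); reflexivity.
  - eapply StRecv with (s:=s) (p:=p); unfold env_union; eauto.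
    rewrite H; eauto. rewrite H0; eauto. rewrite H2; eauto. rewrite H3; eauto.
    intros y Hy; rewrite (H4 y Hy); reflexivity.
  - eapply StEnd; unfold env_union.
    rewrite H; eauto. rewrite H0.
    destruct (Hd (SEP _ _ _ s p)); congruence.
    intros y Hy; rewrite (H1 y Hy); reflexivity.
  - eapply StRec with (Dm := env_union Dm D2); unfold env_union.
    rewrite H; eauto. rewrite H0; eauto.
    intros y Hy; rewrite (H1 y Hy); reflexivity.
    apply IHenv_step. intros x.
    destruct (Hd x) as [Hx|Hx]; auto.
    destruct (classic (In x [SEP _ _ _ s p])) as [Hin|Hin].
    + destruct Hin as [<-|[]]. right. destruct (Hd (SEP _ _ _ s p)); congruence.
    + left. rewrite (H1 x Hin); auto.
Qed.
End Aux.

Theorem lemmaB7 (Role Label Pay Actor AP Tok Sess : Type)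
  (D1 D2 D1' : env Role Label Pay Actor AP Tok Sess) :
  is_env D1 -> is_env D2 -> is_env D1' ->
  env_disjoint D1 D2 -> env_disjoint D1' D2 ->
  safe (env_union D1 D2) ->
  env_reduces D1 D1' ->
  safe (env_union D1' D2).
Proof.
  intros _ _ _ Hd _ [P [HP HPD]] [Da [Db [E1 [St E2]]]].
  exists P; split; auto.
  destruct (HP _ HPD) as [_ [_ H3]]. apply H3.
  exists (env_union Da D2), (env_union Db D2); repeat split.
  - apply equiv_union; auto.
  - apply step_union; auto. intros x. destruct (Hd x); [left|right]; auto.
    apply (proj1 (equiv_none _ _ _ _ _ _ _ _ _ x E1)); auto.
  - apply equiv_union; auto.
Qed.
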